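(* If the dual distance $2$-VC dimension of a graph $G$ is at least $t$, then $K_t$ is a minor of $G$.
   Context: The distance hypergraph $\mathcal{H}(G)$ has vertex set $V(G)$ and, as hyperedges, all balls $B(v,r)=\{u:d(u,v)\leq r\}$ for $v\in V(G)$ and integers $r\geq0$. Its dual $\mathcal{H}(G)^*$ has the hyperedges of $\mathcal{H}(G)$ as vertices and, for each vertex $u$ of $G$, a hyperedge consisting of all balls containing $u$. In a hypergraph, a set $X$ of vertices is $2$-shattered if for every $X'\subseteq X$ with $|X'|=2$ there is a hyperedge $e$ with $e\cap X=X'$; the $2$-VC dimension is the maximum size of a $2$-shattered set. The dual distance $2$-VC dimension of $G$ is the $2$-VC dimension of $\mathcal{H}(G)^*$. Equivalently, it is at least $t$ iff there are balls $B(v_1,r_1),\dots,B(v_t,r_t)$ such that for all $i\neq j$ some vertex $x_{ij}$ satisfies $d(x_{ij},v_i)\le r_i$, $d(x_{ij},v_j)\le r_j$, and $d(x_{ij},v_m)>r_m$ for all $m\notin\{i,j\}$. *)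

(* Defs.v *)
From mathcomp Require Import all_boot.
Set Implicit Arguments. Unset Strict Implicit. Unset Printing Implicit Defensive.

Section Graphs.
Variable T : finType.
Variable e : rel T.

Definition simple_graph := symmetric e /\ irreflexive e.

(* ball v r = B(v,r) = { u : d(u,v) <= r }, by BFS layers:
   B(v,0) = {v}, B(v,r+1) = B(v,r) plus all neighbours of B(v,r). *)
Fixpoint ball (v : T) (r : nat) : {set T} :=
  match r with
  | 0 => [set v]
  | r'.+1 => ball v r' :|: [set u | [exists w in ball v r', e w u]]
  end.

Definition is_ball (B : {set T}) : Prop := exists v r, B = ball v r.

(* X (a set of vertices of H(G)^*, i.e. of balls) is 2-shattered in the dual
   hypergraph H(G)^*, whose hyperedges are, for each u, {B ball | u \in B}. *)
Definition dual_2shattered (X : {set {set T}}) : Prop :=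
  (forall B, B \in X -> is_ball B) /\
  forall X' : {set {set T}}, X' \subset X -> #|X'| = 2 ->
    exists u : T, [set B in X | u \in B] = X'.

Definition dual_dist_2VC_ge (t : nat) : Prop :=
  exists X : {set {set T}}, dual_2shattered X /\ t <= #|X|.

Definition connected_set (S : {set T}) : bool :=
  [forall x in S, forall y in S,
     connect [rel a b | [&& e a b, a \in S & b \in S]] x y].

Definition has_K_minor (t : nat) : Prop :=
  exists f : 'I_t -> {set T},
    (forall i, f i != set0) /\
    (forall i, connected_set (f i)) /\
    (forall i j, i != j -> [disjoint f i & f j]) /\
    (forall i j, i != j -> exists x y, [/\ x \in f i, y \in f j & e x y]).

End Graphs.

(* Main.v *)
Require Import Defs.
From mathcomp Require Import all_boot zify.
Set Implicit Arguments. Unset Strict Implicit. Unset Printing Implicit Defensive.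

Section Balls.
Variables (T : finType) (e : rel T).
Hypothesis esym : symmetric e.

Lemma ball_center v r : v \in ball e v r.
Proof. elim: r => [|r IH] /=; first by rewrite inE. by rewrite inE IH. Qed.

Lemma ball_S v r u : (u \in ball e v r.+1) = (u \in ball e v r) || [exists w in ball e v r, e w u].
Proof. by rewrite /= !inE. Qed.

Lemma ball_monoW v r s u : r <= s -> u \in ball e v r -> u \in ball e v s.
Proof.
move=> /subnKC <-; elim: (s - r) => [|k IH]; first by rewrite addn0.
by move=> H; rewrite addnS ball_S IH.
Qed.

Lemma ball_step v r w u : w \in ball e v r -> e w u -> u \in ball e v r.+1.
Proof. move=> Hw Hwu; rewrite ball_S; apply/orP; right; apply/existsP; exists w; by rewrite Hw. Qed.

Lemma ball_tri a u w p q : u \in ball e a p -> w \in ball e u q -> w \in ball e a (p + q).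
Proof.
move=> Hu; elim: q w => [|q IH] w.
  by rewrite /= inE => /eqP ->; rewrite addn0.
rewrite ball_S => /orP [/IH H|/existsP [z /andP [Hz Hzw]]].
  by apply: ball_monoW H; rewrite addnS.
by rewrite addnS; apply: ball_step (IH _ Hz) Hzw.
Qed.

Variable N : nat.
Definition dist v u := find (fun k => u \in ball e v k) (iota 0 N).

Lemma dist_le v u : dist v u <= N.
Proof. by have := find_size (fun k => u \in ball e v k) (iota 0 N); rewrite size_iota. Qed.

Lemma distP v u r : r < N -> (u \in ball e v r) = (dist v u <= r).
Proof.
move=> rN; apply/idP/idP => H.
  rewrite leqNgt; apply/negP => Hlt.
  have := before_find 0 Hlt; rewrite nth_iota // add0n H //.
have hs : has (fun k => u \in ball e v k) (iota 0 N).
  by rewrite has_find size_iota; apply: leq_ltn_trans H rN.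
have := nth_find 0 hs; rewrite nth_iota; last by apply: leq_ltn_trans H rN.
by rewrite add0n; apply: ball_monoW.
Qed.

Lemma dist_lip v u w : e u w -> dist v u <= (dist v w).+1.
Proof.
move=> Huw.
case: (ltnP (dist v w) N) => Hw; last by apply: leq_trans (dist_le _ _) (leqW Hw).
have Bw : w \in ball e v (dist v w) by rewrite distP.
have Bu : u \in ball e v (dist v w).+1 by apply: ball_step Bw _; rewrite esym.
case: (ltnP (dist v w).+1 N) => H1; first by rewrite -distP.
by apply: leq_trans (dist_le _ _) H1.
Qed.

Lemma dist_geo v u k : dist v u < N -> dist v u = k.+1 ->
  exists w, e w u /\ dist v w = k.
Proof.
move=> HN Hk.
have kN : k < N by rewrite -ltnS -Hk; apply: leq_trans HN _.
have Bu : u \in ball e v k.+1 by rewrite distP ?Hk // -Hk.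
have nBu : u \notin ball e v k by rewrite distP // Hk ltnn.
move: Bu; rewrite ball_S (negbTE nBu) /= => /existsP [w /andP [Bw ewu]].
exists w; split => //.
have := dist_lip v (_ : e u w); rewrite esym => /(_ ewu); rewrite Hk ltnS => H1.
have : dist v w <= k by rewrite -distP.
by move=> H2; apply/eqP; rewrite eqn_leq H1 H2.
Qed.

Lemma dist0 v u : 0 < N -> dist v u = 0 -> u = v.
Proof.
move=> HN H.
have : u \in ball e v 0 by rewrite distP // H.
by rewrite /= inE => /eqP.
Qed.

Lemma dist_center v : 0 < N -> dist v v = 0.
Proof. move=> HN; apply/eqP; rewrite -leqn0 -distP //; exact: ball_center. Qed.
End Balls.

Section Main.
Variables (T : finType) (e : rel T).
Hypothesis esym : symmetric e.
Variables (N t : nat) (c : 'I_t -> T) (r : 'I_t -> nat).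
Hypothesis HN : forall i, r i < N.

Notation d := (dist e N).
Definition sig m u := r m + N - d (c m) u.
Definition beats u i m := (sig m u < sig i u) || ((sig m u == sig i u) && (i < m)).
Definition B i := ball e (c i) (r i).
Definition R i := [set u | (u \in B i) && [forall m, (m != i) ==> beats u i m]].

Lemma inB m u : (u \in B m) = (N <= sig m u).
Proof. rewrite /B (@distP _ e N) // /sig; have := dist_le e N (c m) u; lia. Qed.

Lemma beats_step i m u w : d (c i) u = (d (c i) w).+1 -> e u w ->
  beats u i m -> beats w i m.
Proof.
move=> Hd euw; have := dist_lip esym N (c m) euw.
have := dist_le e N (c i) u; have := dist_le e N (c m) u; have := dist_le e N (c m) w.
rewrite /beats /sig => h1 h2 h3 h4.
case/orP => [h|/andP [/eqP h hi]]; apply/orP.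
  left; lia.
case: (ltngtP (r m + N - d (c m) w) (r i + N - d (c i) w)) => h5.
- by left.
- lia.
- by right; rewrite hi andbT; apply/eqP.
Qed.

Lemma beats_anti u i m : i != m -> beats u i m -> beats u m i -> False.
Proof.
rewrite /beats => nim.
case: (ltngtP (sig m u) (sig i u)) => h //=; rewrite ?ltnn ?orbF ?andbT.
move=> h1 h2; have : (i < i)%N by apply: ltn_trans h1 h2.
by rewrite ltnn.
Qed.

Lemma winner u (i0 : 'I_t) : exists w, forall m, m != w -> beats u w m.
Proof.
case: (@arg_maxnP _ i0 xpredT (fun m : 'I_t => sig m u * t.+1 + (t - m))) => // w _ Hw.
exists w => m nmw; have := Hw m isT.
have := ltn_ord m; have := ltn_ord w.
have nmw' : (m : nat) != w by [].
rewrite /beats.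
case: (ltngtP (sig m u) (sig w u)) => h //=.
  have : (sig w u).+1 * t.+1 <= sig m u * t.+1 by rewrite leq_mul2r h orbT.
  lia.
rewrite h; lia.
Qed.

Definition rl (S : {set T}) := [rel a b | [&& e a b, a \in S & b \in S]].

Lemma N0 (i : 'I_t) : 0 < N.
Proof. exact: leq_ltn_trans (leq0n _) (HN i). Qed.

Lemma R_to_center i u : u \in R i -> connect (rl (R i)) u (c i).
Proof.
move Hk: (d (c i) u) => k; elim: k u Hk => [|k IH] u Hk Hu.
  by rewrite (dist0 (N0 i) Hk) connect0.
have uB : u \in B i by move: Hu; rewrite inE => /andP [].
have dN : d (c i) u < N.
  by move: uB; rewrite /B (@distP _ e N) // => h; apply: leq_ltn_trans h (HN i).
have [w [ewu Hw]] := dist_geo esym dN Hk.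
have wR : w \in R i.
  move: Hu; rewrite !inE => /andP [uB' /forallP H]; apply/andP; split.
    move: uB'; rewrite /B !(@distP _ e N) // Hw Hk => h; exact: ltnW.
  apply/forallP => m; apply/implyP => nm.
  apply: (beats_step (u := u)) (implyP (H m) nm); first by rewrite Hk Hw.
  by rewrite esym.
apply: connect_trans (IH w Hw wR); apply: connect1; by rewrite /= Hu wR esym ewu.
Qed.

Lemma R_connected i : connected_set e (R i).
Proof.
apply/forallP => x; apply/implyP => xR; apply/forallP => y; apply/implyP => yR.
apply: connect_trans (R_to_center xR) _.
have hs : symmetric (rl (R i)).
  move=> a b /=; rewrite esym; congr andb; exact: andbC.
rewrite (sym_connect_sym hs); exact: R_to_center yR.
Qed.

Lemma R_disj i j : i != j -> [disjoint R i & R j].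
Proof.
move=> nij; rewrite disjoints_subset; apply/subsetP => u; rewrite !inE => /andP [_ /forallP Hi].
apply/negP => /andP [_ /forallP Hj].
apply: (beats_anti nij (implyP (Hi j) _) (implyP (Hj i) _)) => //.
by rewrite eq_sym.
Qed.

Lemma beats_B u w m : beats u w m -> u \in B m -> u \in B w.
Proof.
rewrite !inB /beats => /orP [h|/andP [/eqP h _]] h2; last by rewrite -h.
exact: leq_trans (ltnW h).
Qed.

Lemma B_beats u j m : u \in B j -> u \notin B m -> beats u j m.
Proof.
rewrite !inB -ltnNge /beats => h1 h2; apply/orP; left; exact: leq_trans h2 h1.
Qed.

Lemma R_win u w : u \in B w -> (forall m, m != w -> beats u w m) -> u \in R w.
Proof.
move=> h1 h2; rewrite inE h1; apply/forallP => m; apply/implyP; exact: h2.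
Qed.

Lemma push i j : i != j -> c j \notin R i -> forall k u, d (c j) u = k -> u \in R i ->
  u \in B j -> (forall m, m != i -> m != j -> beats u j m) ->
  exists a b, [/\ a \in R i, b \in R j & e a b].
Proof.
move=> nij ncj; elim=> [|k IH] u Hk uR uBj Hb.
  by move: uR; rewrite (dist0 (N0 i) Hk) (negbTE ncj).
have dN : d (c j) u < N.
  by move: uBj; rewrite /B (@distP _ e N) // => h; apply: leq_ltn_trans h (HN j).
have [w [ewu Hw]] := dist_geo esym dN Hk.
have wBj : w \in B j.
  move: uBj; rewrite /B !(@distP _ e N) // Hw Hk => h; exact: ltnW.
have Hbw : forall m, m != i -> m != j -> beats w j m.
  move=> m h1 h2; apply: (beats_step (u := u)) (Hb m h1 h2); first by rewrite Hk Hw.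
  by rewrite esym.
have [ww Hww] := winner w i.
case: (eqVneq ww j) => [E|nwj].
  subst ww; exists u, w; split => //; first exact: R_win.
  by rewrite esym.
case: (eqVneq ww i) => [E|nwi].
  subst ww; have wBi : w \in B i by apply: beats_B (Hww j _) wBj; rewrite eq_sym.
  exact: (IH w Hw (R_win wBi Hww) wBj Hbw).
by case: (beats_anti nwj (Hww j _) (Hbw ww nwi nwj)); rewrite eq_sym.
Qed.

Hypothesis Hsh : forall i j, i != j -> exists x,
  [/\ x \in B i, x \in B j & forall m, m != i -> m != j -> x \notin B m].
Hypothesis Ht : 2 < t.

Lemma third i j : exists k : 'I_t, k != i /\ k != j.
Proof.
have : ~~ ([set: 'I_t] \subset [set i; j]).
  apply/negP => /subset_leq_card; rewrite cardsT card_ord cards2 => h.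
  have : t <= 2 by apply: leq_trans h _; case: (_ != _).
  lia.
case/subsetPn => k _; rewrite !inE negb_or => /andP [h1 h2]; by exists k.
Qed.

Lemma noc i j : i != j -> c j \notin R i.
Proof.
move=> nij; apply/negP; rewrite inE => /andP [cjB /forallP H].
have := implyP (H j) (_ : j != i); rewrite eq_sym => /(_ nij).
have dcj : d (c j) (c j) = 0 by apply: dist_center; exact: N0 i.
have := dist_le e N (c i) (c j).
rewrite /beats /sig dcj => h0 h.
have hle : d (c i) (c j) + r j <= r i.
  case/orP: h => [h|/andP [/eqP h _]]; lia.
have [k [hki hkj]] := third i j.
have njk : j != k by rewrite eq_sym.
have nik : i != k by rewrite eq_sym.
have [x [xBj xBk Hx]] := Hsh njk.
have := Hx i nij nik.
have cjb : c j \in ball e (c i) (d (c i) (c j)).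
  rewrite (@distP _ e N) //; apply: leq_ltn_trans (HN i); lia.
by rewrite /B (ball_monoW hle (ball_tri cjb xBj)).
Qed.

Lemma adj i j : i != j -> exists a b, [/\ a \in R i, b \in R j & e a b].
Proof.
move=> nij; have [x [xBi xBj Hx]] := Hsh nij.
have [ww Hww] := winner x i.
case: (eqVneq ww j) => [E|nwj].
  subst ww; have nji : j != i by rewrite eq_sym.
  have [a [b [aR bR eab]]] : exists a b, [/\ a \in R j, b \in R i & e a b].
    apply: (push nji (noc nji) (erefl _) (R_win xBj Hww) xBi).
    move=> m h1 h2; apply: B_beats => //; apply: Hx => //.
  by exists b, a; rewrite esym.
case: (eqVneq ww i) => [E|nwi].
  subst ww; have nji : j != i by rewrite eq_sym.
  apply: (push nij (noc nij) (erefl _) (R_win xBi Hww) xBj).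
  move=> m h1 h2; apply: B_beats => //; apply: Hx => //.
have := Hx ww nwi nwj; rewrite (beats_B (Hww i _) xBi) //.
by rewrite eq_sym.
Qed.

Lemma main_minor : has_K_minor e t.
Proof.
exists R; split; [|split; [|split]].
- move=> i; have [k [hki _]] := third i i.
  have nik : i != k by rewrite eq_sym.
  have [a [b [aR _ _]]] := adj nik.
  by apply/set0Pn; exists a.
- exact: R_connected.
- exact: R_disj.
- move=> i j nij; have [a [b [aR bR eab]]] := adj nij; by exists a, b.
Qed.
End Main.

Lemma noedge_ball (T : finType) (e : rel T) v r : (forall a b, ~~ e a b) -> ball e v r = [set v].
Proof.
move=> H; elim: r => [|r IH] //=; rewrite IH; apply/setP => u; rewrite !inE.
case: (u == v) => //=; apply/negbTE/existsP => [[w /andP [_ h]]]; by rewrite (negbTE (H w u)) in h.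
Qed.

Lemma single_conn (T : finType) (e : rel T) v : connected_set e [set v].
Proof.
apply/forallP => x; apply/implyP; rewrite inE => /eqP ->.
apply/forallP => y; apply/implyP; rewrite inE => /eqP ->; exact: connect0.
Qed.

Lemma K0 (T : finType) (e : rel T) : has_K_minor e 0.
Proof. by exists (fun _ => set0); split; [|split; [|split]]; case. Qed.

Lemma K1 (T : finType) (e : rel T) (v : T) : has_K_minor e 1.
Proof.
exists (fun _ => [set v]); split; [|split; [|split]].
- by move=> _; apply/set0Pn; exists v; rewrite inE.
- by move=> _; apply: single_conn.
- by move=> i j; rewrite !ord1 eqxx.
- by move=> i j; rewrite !ord1 eqxx.
Qed.

Lemma K2 (T : finType) (e : rel T) (a b : T) : symmetric e -> e a b -> a != b -> has_K_minor e 2.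
Proof.
move=> esym eab nab.
exists (fun i : 'I_2 => if val i == 0 then [set a] else [set b]); split; [|split; [|split]].
- by move=> i; case: ifP => _; apply/set0Pn; [exists a|exists b]; rewrite inE.
- by move=> i; case: ifP => _; apply: single_conn.
- move=> [[|[|//]] Hi] [[|[|//]] Hj] //= _; rewrite -setI_eq0; apply/eqP/setP => u; rewrite !inE.
    by case: (u =P a) => // ->; rewrite (negbTE nab).
  by case: (u =P b) => // ->; rewrite eq_sym (negbTE nab).
- move=> [[|[|//]] Hi] [[|[|//]] Hj] //= _.
    by exists a, b; rewrite !inE.
  by exists b, a; rewrite !inE esym.
Qed.

Theorem theorem6 (T : finType) (e : rel T) (t : nat) :
  simple_graph e -> dual_dist_2VC_ge e t -> has_K_minor e t.
Proof.
move=> [esym eirr] [X [[Xb Xsh] tX]].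
pose bs := enum X.
pose Bs (i : 'I_t) := nth set0 bs i.
have ilt : forall i : 'I_t, i < size bs by move=> i; rewrite /bs -cardE; apply: leq_trans tX.
have BsX : forall i, Bs i \in X by move=> i; rewrite -mem_enum; apply: mem_nth.
have Bsd : forall i j, (Bs i == Bs j) = (i == j).
  by move=> i j; rewrite /Bs nth_uniq ?enum_uniq.
have Hb : forall i : 'I_t, exists p : T * nat, Bs i == ball e p.1 p.2.
  move=> i; have [v [r E]] := Xb _ (BsX i); by exists (v, r); rewrite E.
pose c i := (xchoose (Hb i)).1.
pose r i := (xchoose (Hb i)).2.
have Bsp : forall i, Bs i = ball e (c i) (r i) by move=> i; apply/eqP; exact: xchooseP (Hb i).
have BB : forall i, B e c r i = Bs i by move=> i; rewrite Bsp.
have Hsh : forall i j, i != j -> exists x,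
  [/\ x \in B e c r i, x \in B e c r j & forall m, m != i -> m != j -> x \notin B e c r m].
  move=> i j nij.
  have sub : [set Bs i; Bs j] \subset X by apply/subsetP => B; rewrite !inE => /orP [] /eqP ->.
  have c2 : #|[set Bs i; Bs j]| = 2 by rewrite cards2 Bsd nij.
  have [u Hu] := Xsh _ sub c2.
  have mem : forall m, (u \in Bs m) = (Bs m \in [set Bs i; Bs j]).
    by move=> m; rewrite -Hu inE BsX.
  exists u; split.
  - by rewrite BB (mem i) !inE eqxx.
  - by rewrite BB (mem j) !inE eqxx orbT.
  by move=> m h1 h2; rewrite BB (mem m) !inE !Bsd negb_or h1 h2.
case: (ltnP 2 t) => t3.
  have HN : forall i, r i < (\max_(k < t) r k).+1.
    by move=> i; rewrite ltnS; apply: (leq_bigmax i).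
  exact: (main_minor esym HN Hsh t3).
have t0 : t = 0 \/ 0 < t by lia.
case: t0 => [-> | t0]; first exact: K0.
have t1 : t = 1 \/ 1 < t by lia.
case: t1 => [-> | t1]; first exact: (K1 e (c (Ordinal t0))).
have -> : t = 2 by lia.
pose i0 := Ordinal t0; pose i1 := Ordinal t1.
have n01 : i0 != i1 by [].
have [x [x0 x1 _]] := Hsh _ _ n01.
case: (boolP [exists a, exists b, e a b]) => [/existsP [a /existsP [b eab]]|H].
  apply: (K2 esym eab); apply/eqP => E; by rewrite E eirr in eab.
have H' : forall a b, ~~ e a b.
  move=> a b; apply/negP => eab; move/negP: H; apply; apply/existsP; exists a; apply/existsP; by exists b.
move: x0 x1; rewrite /B !noedge_ball // !inE => /eqP -> /eqP E.
have : Bs i0 == Bs i1.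
  apply/eqP; move: (Bsp i0) (Bsp i1) => -> ->.
  by rewrite !noedge_ball // E.
by rewrite (Bsd i0 i1) (negbTE n01).
Qed.
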